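(* Let $1\gg p,q\gg n^{-1}$. Let $G$ be an $n$-vertex $q$-cut-dense graph and let $S$ be a $p$-random subset of $V(G)$. Then with high probability every induced subgraph of $G$ whose vertex set contains $S$ is $p^{q^{-4}}q^5$-cut-dense.
   Context: A graph $G$ is $q$-cut-dense if for every partition $V(G)=A\cup B$ into disjoint sets, the number of edges between $A$ and $B$ is at least $q|A||B|$. A $p$-random subset contains each vertex independently with probability $p$. ''$1\gg p,q\gg n^{-1}$'' means $p,q$ are sufficiently small positive constants and $n$ is sufficiently large in terms of $p,q$; ''with high probability'' means with probability tending to $1$ as $n\to\infty$. *)

(* Defs.v *)
From HB Require Import structures.
From mathcomp Require Import all_boot all_order all_algebra.
From mathcomp Require Import reals exp.
Set Implicit Arguments. Unset Strict Implicit. Unset Printing Implicit Defensive.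
Import Order.TTheory GRing.Theory Num.Theory.
Local Open Scope ring_scope.

Definition simple_graph (T : finType) (e : rel T) : Prop :=
  (forall x y, e x y = e y x) /\ (forall x, ~~ e x x).

Definition e_between (T : finType) (e : rel T) (A B : {set T}) : nat :=
  #|[set xy : T * T | [&& xy.1 \in A, xy.2 \in B & e xy.1 xy.2]]|.

Definition cut_dense_on (R : realType) (T : finType) (e : rel T)
    (U : {set T}) (q : R) : bool :=
  [forall A : {set T}, forall B : {set T},
     ((A :&: B == set0) && (A :|: B == U)) ==>
     (q * #|A|%:R * #|B|%:R <= (e_between e A B)%:R)].

Definition cut_dense (R : realType) (T : finType) (e : rel T) (q : R) : bool :=
  cut_dense_on e [set: T] q.

(* Probability that a p-random subset S of T (each vertex independently with
   probability p) satisfies the predicate P. *)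
Definition prob_random_subset (R : realType) (T : finType) (p : R)
    (P : pred {set T}) : R :=
  \sum_(S : {set T} | P S) p ^+ #|S| * (1 - p) ^+ (#|T| - #|S|).

(* Main.v *)
Require Import Defs.
From HB Require Import structures.
From mathcomp Require Import all_boot all_order all_algebra.
From mathcomp Require Import reals exp.
From mathcomp Require Import ring lra.
Import Order.TTheory GRing.Theory Num.Theory.
Set Implicit Arguments. Unset Strict Implicit. Unset Printing Implicit Defensive.
Local Open Scope ring_scope.

Definition wgt (R : realType) (T : finType) (p : R) (S : {set T}) : R :=
  p ^+ #|S| * (1 - p) ^+ (#|T| - #|S|).

Lemma wgt_prod (R : realType) (T : finType) (p : R) (S : {set T}) :
  wgt p S = \prod_i (if i \in S then p else 1 - p).
Proof.
rewrite /wgt (bigID (fun i => i \in S)) /=; symmetry.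
rewrite (eq_bigr (fun _ => p)); last by move=> i ->.
rewrite [X in _ * X](eq_bigr (fun _ => 1 - p)); last by move=> i /negbTE ->.
rewrite !prodr_const.
congr (_ ^+ _ * _ ^+ _).
rewrite -(cardsC S) addKn; apply: eq_card => i; by rewrite !inE.
Qed.

Lemma wgt_ge0 (R : realType) (T : finType) (p : R) (S : {set T}) :
  0 <= p <= 1 -> 0 <= wgt p S.
Proof.
move=> /andP[p0 p1]; rewrite /wgt mulr_ge0 // exprn_ge0 //; lra.
Qed.

Lemma sum_wgt_g (R : realType) (T : finType) (p : R) (g : T -> R) :
  \sum_(S : {set T}) wgt p S * \prod_(i in S) g i
  = \prod_i (p * g i + (1 - p)).
Proof.
rewrite (bigA_distr 1 +%R (fun i => p * g i) (fun _ => 1 - p)).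
apply: eq_bigr => S _.
rewrite wgt_prod (big_mkcond (fun i => i \in S)) -big_split /=.
apply: eq_bigr => i _; case: (i \in S); rewrite ?mulr1 ?mul1r //.
Qed.

Lemma sum_wgt (R : realType) (T : finType) (p : R) :
  \sum_(S : {set T}) wgt p S = 1.
Proof.
transitivity (\sum_(S : {set T}) wgt p S * \prod_(i in S) (fun _ => (1:R)) i).
  by apply: eq_bigr => S _; rewrite big1 ?mulr1.
rewrite sum_wgt_g big1 // => i _; lra.
Qed.
Lemma prob_wgt (R : realType) (T : finType) (p : R) (P : pred {set T}) :
  prob_random_subset p P = \sum_(S | P S) wgt p S.
Proof. by []. Qed.

Lemma prob_ge0 (R : realType) (T : finType) (p : R) (P : pred {set T}) :
  0 <= p <= 1 -> 0 <= prob_random_subset p P.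
Proof. move=> hp; rewrite prob_wgt sumr_ge0 // => S _; exact: wgt_ge0. Qed.

Lemma prob_compl (R : realType) (T : finType) (p : R) (P : pred {set T}) :
  prob_random_subset p P = 1 - prob_random_subset p (predC P).
Proof.
rewrite !prob_wgt; have h := @sum_wgt R T p.
rewrite (bigID P) /= in h; rewrite -h.
lra.
Qed.

Lemma prob_mono (R : realType) (T : finType) (p : R) (P Q : pred {set T}) :
  0 <= p <= 1 -> (forall S, Q S -> P S) ->
  prob_random_subset p Q <= prob_random_subset p P.
Proof.
move=> hp hQP; rewrite !prob_wgt (big_mkcond Q) (big_mkcond P) /=.
apply: ler_sum => S _; case hq: (Q S); first by rewrite hQP.
by case: (P S); rewrite ?wgt_ge0.
Qed.

Lemma prob_union (R : realType) (T I : finType) (p : R) (bad : I -> pred {set T}) :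
  0 <= p <= 1 ->
  prob_random_subset p (fun S => [exists i, bad i S])
  <= \sum_i prob_random_subset p (bad i).
Proof.
move=> hp; rewrite prob_wgt.
under [X in _ <= X]eq_bigr do rewrite prob_wgt (big_mkcond (bad _)) /=.
rewrite exchange_big /= (big_mkcond (fun S => [exists i, bad i S])) /=.
apply: ler_sum => S _; case: existsP => [[i hi]|_]; last first.
  by rewrite sumr_ge0 // => i _; case: (bad i S); rewrite ?wgt_ge0.
rewrite (bigD1 i) //= hi lerDl sumr_ge0 // => j _.
by case: (bad j S); rewrite ?wgt_ge0.
Qed.

Lemma two_le_expR (R : realType) (k : nat) : (2:R) ^+ k <= sequences.expR k%:R.
Proof.
rewrite -[k%:R]mulr1 expRM_natl; apply: lerXn2r; rewrite ?nnegrE ?expR_ge0 //.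
have := expR_ge1Dx (1:R); lra.
Qed.

Lemma chernoff (R : realType) (T : finType) (p : R) (Z : {set T}) (t : R) :
  0 <= p <= 1 ->
  prob_random_subset p (fun S => #|Z :&: S|%:R < t)
  <= sequences.expR (t - p * #|Z|%:R / 2).
Proof.
move=> hp; have [p0 p1] := andP hp.
pose g := fun i : T => if i \in Z then (1/2 : R) else 1.
have hg : forall S : {set T}, \prod_(i in S) g i = (1/2) ^+ #|Z :&: S|.
  move=> S; rewrite (bigID (fun i => i \in Z)) /= [X in _ * X]big1; last first.
    by move=> i /andP[_ /negbTE]; rewrite /g => ->.
  rewrite mulr1 (eq_bigr (fun _ => 1/2)); last by move=> i /andP[_]; rewrite /g => ->.
  rewrite prodr_const; congr (_ ^+ _); apply: eq_card => i; rewrite !inE andbC //.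
apply: (@le_trans _ _ (sequences.expR t * \sum_(S : {set T}) wgt p S * \prod_(i in S) g i)).
  rewrite prob_wgt mulr_sumr (big_mkcond (fun S => _ < t)) /=.
  apply: ler_sum => S _; case: ifP => ht; last first.
    apply: mulr_ge0; first exact: expR_ge0.
    apply: mulr_ge0; first exact: wgt_ge0.
    rewrite hg; apply: exprn_ge0; lra.
  rewrite hg mulrCA -{1}[wgt p S]mulr1; apply: ler_wpM2l; first exact: wgt_ge0.
  apply: (@le_trans _ _ (sequences.expR (#|Z :&: S|%:R) * (1/2) ^+ #|Z :&: S|)).
    have h2 : (2:R) ^+ #|Z :&: S| * (1/2) ^+ #|Z :&: S| = 1.
      by rewrite -exprMn (_ : (2:R) * (1/2) = 1) ?expr1n //; field.
    rewrite -{1}h2; apply: ler_wpM2r; last exact: two_le_expR.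
    apply: exprn_ge0; lra.
  apply: ler_wpM2r; first by apply: exprn_ge0; lra.
  rewrite ler_expR; exact: ltW.
rewrite sum_wgt_g.
rewrite (bigID (fun i => i \in Z)) /= [X in _ * (_ * X)]big1; last first.
  by move=> i /negbTE; rewrite /g => ->; lra.
rewrite mulr1 (eq_bigr (fun _ => 1 - p / 2)); last by move=> i; rewrite /g => ->; lra.
rewrite prodr_const expRD; apply: ler_wpM2l; first exact: expR_ge0.
rewrite (_ : - (p * #|Z|%:R / 2) = (- (p / 2)) * #|Z|%:R); last by ring.
rewrite expRM_natr; apply: lerXn2r; rewrite ?nnegrE ?expR_ge0 //; first lra.
have := expR_ge1Dx (- (p / 2)); lra.
Qed.

Definition nb (T : finType) (e : rel T) (v : T) : {set T} := [set w | e v w].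

Lemma ebetween_dsum (T : finType) (e : rel T) (A B : {set T}) :
  e_between e A B =
  (\sum_x \sum_y (if [&& x \in A, y \in B & e x y] then 1 else 0))%N.
Proof.
rewrite /e_between -sum1_card (big_mkcond (fun xy => xy \in _)) /=.
rewrite (pair_big xpredT xpredT (fun x y => if [&& x \in A, y \in B & e x y] then 1 else 0)%N) /=.
by apply: eq_bigr => -[x y] _; rewrite inE.
Qed.

Lemma ebetween_suml (T : finType) (e : rel T) (A B : {set T}) :
  e_between e A B = (\sum_(x in A) #|nb e x :&: B|)%N.
Proof.
rewrite ebetween_dsum (big_mkcond (fun x => x \in A)) /=.
apply: eq_bigr => x _; case: (x \in A) => /=; last by rewrite big1.
rewrite -sum1_card (big_mkcond (fun y => y \in _)) /=.
by apply: eq_bigr => y _; rewrite !inE andbC.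
Qed.

Lemma ebetween_sumr (T : finType) (e : rel T) (A B : {set T}) :
  (forall x y, e x y = e y x) ->
  e_between e A B = (\sum_(y in B) #|nb e y :&: A|)%N.
Proof.
move=> hsym; rewrite ebetween_dsum exchange_big (big_mkcond (fun y => y \in B)) /=.
apply: eq_bigr => y _; case: (y \in B) => /=; last first.
  by rewrite big1 // => x _; rewrite andbF.
rewrite -sum1_card (big_mkcond (fun x => x \in _)) /=.
by apply: eq_bigr => x _; rewrite !inE hsym andbC.
Qed.

Lemma mindeg (R : realType) (T : finType) (e : rel T) (q : R) (u : T) :
  simple_graph e -> cut_dense e q ->
  q * (#|T| - 1)%:R <= #|nb e u|%:R.
Proof.
move=> [hsym hirr] /forallP /(_ [set u]) /forallP /(_ (~: [set u])) /implyP.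
rewrite setICr eqxx setUCr eqxx /= => H; have {H} := H isT.
rewrite cards1 mulr1 cardsC1 ebetween_suml big_set1.
have -> : nb e u :&: ~: [set u] = nb e u.
  apply/setP => w; rewrite !inE; case: (eqVneq w u) => [->|]; rewrite ?andbT //.
  by rewrite (negbTE (hirr u)).
by rewrite -subn1.
Qed.

Lemma card_setI_bigcup (T : finType) (A : {set T}) (F : nat -> {set T}) (m : nat) :
  (#|A :&: \bigcup_(j < m) F j| <= \sum_(j < m) #|A :&: F j|)%N.
Proof.
elim: m => [|m IH]; first by rewrite !big_ord0 setI0 cards0.
rewrite !big_ord_recr /= setIUr cardsU.
apply: leq_trans (leq_subr _ _) _; exact: leq_add.
Qed.

Fixpoint lev (R : realType) (T : finType) (e : rel T) (th : R) (u : T) (j : nat)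
  : {set T} :=
  if j is j'.+1 then [set v | th <= #|nb e v :&: lev e th u j'|%:R]
  else nb e u.

Definition covr (R : realType) (T : finType) (e : rel T) (th : R) (u : T) (k : nat)
  : {set T} := \bigcup_(j < k.+1) lev e th u j.

Lemma covr_step (R : realType) (T : finType) (e : rel T) (th : R) (u : T) (k : nat)
  (y : T) :
  0 <= th ->
  k.+1%:R * th <= #|nb e y :&: covr e th u k|%:R -> y \in covr e th u k.+1.
Proof.
move=> th0 hy.
have : [exists j : 'I_k.+1, th <= #|nb e y :&: lev e th u j|%:R].
  case/boolP: [exists j : 'I_k.+1, th <= #|nb e y :&: lev e th u j|%:R] => // /existsPn hall.
  exfalso.
  have := card_setI_bigcup (nb e y) (lev e th u) k.+1.
  rewrite -(ler_nat R) natr_sum => hle.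
  have : \sum_(j < k.+1) #|nb e y :&: lev e th u j|%:R < \sum_(j < k.+1) th.
    apply: ltr_sum; first by apply/hasP; exists ord0; rewrite ?mem_index_enum.
    by move=> j _; have := hall j; rewrite -ltNge.
  rewrite sumr_const card_ord -mulr_natl => hlt.
  have := le_trans hy hle; rewrite /covr; move=> h; have := lt_le_trans hlt h.
  by rewrite ltxx.
move=> /existsP[j hj]; rewrite /covr.
apply/bigcupP; exists (lift ord0 j) => //=.
by rewrite /bump /= add0n inE.
Qed.

Lemma covr_mono (R : realType) (T : finType) (e : rel T) (th : R) (u : T) (k : nat) :
  covr e th u k \subset covr e th u k.+1.
Proof.
apply/subsetP => y /bigcupP[j _ hj]; apply/bigcupP.
by exists (widen_ord (leqnSn _) j).
Qed.

Lemma covr0 (R : realType) (T : finType) (e : rel T) (th : R) (u : T) (k : nat) :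
  nb e u \subset covr e th u k.
Proof.
by apply/subsetP => y hy; apply/bigcupP; exists ord0.
Qed.

Lemma cut_dense_part (R : realType) (T : finType) (e : rel T) (q : R) (X : {set T}) :
  cut_dense e q -> q * #|X|%:R * #|~: X|%:R <= (e_between e X (~: X))%:R.
Proof.
move=> /forallP /(_ X) /forallP /(_ (~: X)) /implyP.
by rewrite setICr eqxx setUCr eqxx => H; apply: H.
Qed.

Lemma card_nb_split (T : finType) (e : rel T) (y : T) (X : {set T}) :
  (#|nb e y| <= #|nb e y :&: X| + #|~: X|)%N.
Proof.
rewrite -(cardsID X (nb e y)) leq_add2l setDE; apply: subset_leq_card.
exact: subsetIr.
Qed.

Lemma aux_ineq (R : realType) (a b c q : R) :
  q * a * b <= a * c + q * a / 2 * b -> q * b / 2 * a <= c * a.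
Proof. move=> h; lra. Qed.

Lemma cover (R : realType) (T : finType) (e : rel T) (q : R) (K : nat) (u v : T) :
  simple_graph e -> cut_dense e q -> 0 < q <= 1 -> (4 <= #|T|)%N ->
  8 < q ^+ 2 * K%:R ->
  exists2 j, (j <= K)%N &
    v \in lev e (q ^+ 2 * #|T|%:R / (4 * K%:R)) u j.
Proof.
move=> hG hcd /andP[q0 q1] hn hK.
set n : R := #|T|%:R; set th := q ^+ 2 * n / (4 * K%:R).
have n4 : 4 <= n by rewrite /n (ler_nat R 4).
have K0 : 0 < K%:R :> R.
  rewrite ltr0n lt0n; apply/eqP => K0; rewrite K0 mulr0 in hK; lra.
have hqq : q * q <= q by rewrite -{3}[q]mulr1; apply: ler_wpM2l => //; lra.
have h1 : q * q * n <= q * n by apply: ler_wpM2r => //; lra.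
have hqn : 4 * q <= q * n by rewrite [q * n]mulrC; apply: ler_wpM2r => //; lra.
have th0 : 0 <= th by rewrite /th divr_ge0 // ?mulr_ge0 ?sqr_ge0 //; lra.
have Kth : K%:R * th = q ^+ 2 * n / 4.
  by rewrite /th; field; rewrite gt_eqF.
have deg : forall y, q * (n - 1) <= #|nb e y|%:R.
  by move=> y; have := mindeg u hG hcd; have := mindeg y hG hcd; rewrite natrB // ?(leq_trans _ hn).
have F1 : forall k y, (k < K)%N -> q ^+ 2 * n / 4 <= #|nb e y :&: covr e th u k|%:R ->
    y \in covr e th u k.+1.
  move=> k y hk hy; apply: covr_step => //; apply: le_trans hy.
  rewrite -Kth ler_wpM2r // ler_nat //.
have F3 : forall k, q * (n - 1) <= #|covr e th u k|%:R.
  move=> k; apply: le_trans (deg u) _; rewrite ler_nat; apply: subset_leq_card.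
  exact: covr0.
have inv : forall k, (k <= K)%N -> covr e th u k = setT \/
    #|~: covr e th u k|%:R + k%:R * (q ^+ 2 * n / 8) <= n.
  elim => [|k IH] hk.
    by right; rewrite mul0r addr0 ler_nat max_card.
  have [h|h] := IH (ltnW hk).
    left; apply/eqP; rewrite eqEsubset subsetT -h /=; exact: covr_mono.
  have hm := covr_mono e th u k.
  set X := covr e th u k in h hm *; set Y := ~: X.
  have Xpos : q * (n - 1) <= #|X|%:R by apply: F3.
  case: (ltrP (#|Y|%:R) (q * n / 4)) => hY.
    left; apply/setP => y; rewrite inE.
    case hy: (y \in X); first by rewrite (subsetP hm).
    apply: F1 => //.
    have := card_nb_split e y X; rewrite -(ler_nat R) natrD => hs.
    rewrite -/Y in hs; have hd := deg y.
    rewrite expr2; lra.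
  right.
  set G := [set y in Y | q * #|X|%:R / 2 <= #|nb e y :&: X|%:R].
  have GY : G \subset Y by apply/subsetP => y; rewrite inE => /andP[].
  have hY1 : ~: covr e th u k.+1 \subset Y :\: G.
    apply/subsetP => y; rewrite inE => hy.
    have hyX : y \notin X.
      by apply/negP => hyX'; move: hy; rewrite (subsetP hm _ hyX').
    have hyG : y \notin G.
      apply/negP => hyG; move: hy; rewrite F1 //.
      move: hyG; rewrite inE => /andP[_ hyG]; apply: le_trans hyG.
      have hn2 : q * n / 2 <= #|X|%:R by lra.
      have : q * (q * n / 2) <= q * #|X|%:R by apply: ler_wpM2l => //; lra.
      rewrite expr2; lra.
    by rewrite in_setD hyG in_setC hyX.
  have hc1 : #|~: covr e th u k.+1|%:R <= #|Y|%:R - #|G|%:R :> R.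
    rewrite -natrB ?subset_leq_card // ler_nat.
    apply: leq_trans (subset_leq_card hY1) _.
    by rewrite cardsD (setIidPr GY).
  have hcut := cut_dense_part X hcd.
  rewrite (ebetween_sumr _ _ hG.1) natr_sum -/Y in hcut.
  have hpt : forall y, y \in Y -> #|nb e y :&: X|%:R <=
      (if y \in G then #|X|%:R else 0) + q * #|X|%:R / 2 :> R.
    move=> y hy; case: ifP => hyG.
      rewrite -[X in X <= _]addr0 lerD // ?ler_nat ?subset_leq_card ?subsetIr //.
      by apply: divr_ge0 => //; apply: mulr_ge0 => //; lra.
    rewrite add0r; apply: ltW; rewrite ltNge; apply/negP => hc.
    by move: hyG; rewrite inE hy hc.
  have hsum : \sum_(i in Y) #|nb e i :&: X|%:R <=
      \sum_(i in Y) ((if i \in G then #|X|%:R else 0) + q * #|X|%:R / 2) :> R.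
    by apply: ler_sum.
  rewrite big_split /= sumr_const in hsum.
  have E : \sum_(i in Y) (if i \in G then #|X|%:R else 0) = \sum_(i in G) #|X|%:R :> R.
    rewrite big_mkcond [RHS]big_mkcond /=; apply: eq_bigr => y _.
    case hyG: (y \in G); last by case: (y \in Y).
    by rewrite (subsetP GY).
  rewrite E sumr_const -[_ *+ #|G|]mulr_natr -[_ *+ #|Y|]mulr_natr in hsum.
  have key : q * #|Y|%:R / 2 <= #|G|%:R.
    have Xp : 0 < #|X|%:R :> R.
      apply: lt_le_trans Xpos; apply: mulr_gt0 => //; lra.
    have h2 : (q * #|Y|%:R / 2) * #|X|%:R <= #|G|%:R * #|X|%:R.
      exact: (aux_ineq (le_trans hcut hsum)).
    by rewrite (ler_pM2r Xp) in h2.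
  have h3 : q * (q * n / 4) <= q * #|Y|%:R by apply: ler_wpM2l => //; lra.
  rewrite -natr1 expr2; lra.
have [h|h] := inv K (leqnn K).
  have : v \in covr e th u K by rewrite h inE.
  by move=> /bigcupP[j _ hj]; exists j => //; rewrite -ltnS.
exfalso; have : 0 <= #|~: covr e th u K|%:R :> R by [].
have : 8 * n < q ^+ 2 * K%:R * n by rewrite ltr_pM2r //; lra.
lra.
Qed.

Definition goodS (R : realType) (T : finType) (e : rel T) (th dd : R) (K : nat)
  (S : {set T}) : bool :=
  [forall u, forall v, forall j : 'I_K,
     (v \in lev e th u j.+1) ==> (dd <= #|nb e v :&: lev e th u j :&: S|%:R)].

Lemma split_AB (R : realType) (T : finType) (W A B : {set T}) :
  W \subset A :|: B ->
  #|W|%:R <= #|W :&: A|%:R + #|W :&: B|%:R :> R.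
Proof.
move=> hW; rewrite -natrD ler_nat -(cardsID A W) leq_add2l.
apply: subset_leq_card; apply/subsetP => x; rewrite !inE => /andP[hxA hxW].
rewrite hxW /=; have := subsetP hW x hxW; rewrite inE.
by rewrite (negbTE hxA).
Qed.

Lemma chain (R : realType) (T : finType) (e : rel T) (th D : R) (K : nat)
  (S A B : {set T}) (a : T) :
  goodS e th (2 * D) K S -> S \subset A :|: B ->
  #|[set z in B | D <= #|nb e z :&: A|%:R]|%:R < D ->
  forall j, (j < K)%N -> forall z, z \in B -> #|nb e z :&: A|%:R < D ->
  z \in lev e th a j.+1 -> D <= #|nb e a :&: B|%:R.
Proof.
move=> hgood hS hHB j; elim: j => [|j IH] hj z hzB hzA hz.
  have := forallP hgood a => /forallP /(_ z) /forallP /(_ (Ordinal hj)) /implyP /(_ hz) /= hW.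
  set W := nb e z :&: nb e a :&: S in hW.
  have hWAB : W \subset A :|: B.
    by apply: subset_trans hS; apply/subsetP => x; rewrite !inE => /andP[].
  have h1 := split_AB R hWAB.
  have h2 : #|W :&: A|%:R <= #|nb e z :&: A|%:R :> R.
    by rewrite ler_nat; apply: subset_leq_card; apply/subsetP => x; rewrite !inE => /andP[/andP[/andP[-> _] _] ->].
  have h3 : #|W :&: B|%:R <= #|nb e a :&: B|%:R :> R.
    by rewrite ler_nat; apply: subset_leq_card; apply/subsetP => x; rewrite !inE => /andP[/andP[/andP[_ ->] _] ->].
  lra.
have := forallP hgood a => /forallP /(_ z) /forallP /(_ (Ordinal hj)) /implyP /(_ hz) /= hW.
set W := nb e z :&: lev e th a j.+1 :&: S in hW.
have hWAB : W \subset A :|: B.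
  by apply: subset_trans hS; apply/subsetP => x; rewrite !inE => /andP[].
have h1 := split_AB R hWAB.
have h2 : #|W :&: A|%:R <= #|nb e z :&: A|%:R :> R.
  by rewrite ler_nat; apply: subset_leq_card; apply/subsetP => x; rewrite !inE => /andP[/andP[/andP[-> _] _] ->].
set HB := [set z in B | D <= #|nb e z :&: A|%:R] in hHB.
have : ~~ (W :&: B \subset HB).
  apply/negP => hsub; have := subset_leq_card hsub; rewrite -(ler_nat R) => h4.
  lra.
case/subsetPn => z' hz'1 hz'2.
move: hz'1; rewrite !inE => /andP[/andP[/andP[_ hz'lev] _] hz'B].
apply: (IH (ltnW hj) z') => //.
  by move: hz'2; rewrite inE hz'B /= -ltNge.
by rewrite /= inE.

Qed.

Lemma sum_sub_ge (R : realType) (T : finType) (B H : {set T}) (f : T -> R) (c : R) :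
  H \subset B -> (forall y, y \in H -> c <= f y) -> (forall y, y \in B -> 0 <= f y) ->
  c * #|H|%:R <= \sum_(y in B) f y.
Proof.
move=> hHB hc hf.
have -> : c * #|H|%:R = \sum_(y in B) (if y \in H then c else 0).
  rewrite -big_mkcondr /= (eq_bigl (fun y => y \in H)); last first.
    by move=> y; case hy: (y \in H); rewrite ?andbT ?andbF // (subsetP hHB).
  by rewrite sumr_const mulr_natr.
apply: ler_sum => y hy; case: ifP => hyH; [exact: hc | exact: hf].
Qed.

Lemma det_cut (R : realType) (T : finType) (e : rel T) (th D : R) (K : nat)
  (S U A B : {set T}) :
  simple_graph e -> goodS e th (2 * D) K S ->
  (forall u v, exists2 j, (j <= K)%N & v \in lev e th u j) ->
  0 < D -> D <= #|T|%:R -> S \subset U -> A :&: B = set0 -> A :|: B = U ->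
  (D / (3 * #|T|%:R)) ^+ 2 * #|A|%:R * #|B|%:R <= (e_between e A B)%:R.
Proof.
move=> hG hgood hcov D0 Dn hSU hAB hABU.
set n : R := #|T|%:R in Dn *.
have n0 : 0 < n by lra.
have hS : S \subset A :|: B by rewrite hABU.
set E : R := (e_between e A B)%:R.
have esum1 : E = \sum_(x in A) #|nb e x :&: B|%:R by rewrite /E ebetween_suml natr_sum.
have esum2 : E = \sum_(y in B) #|nb e y :&: A|%:R by rewrite /E (ebetween_sumr _ _ hG.1) natr_sum.
set HB := [set z in B | D <= #|nb e z :&: A|%:R].
set HA := [set z in A | D <= #|nb e z :&: B|%:R].
have HBB : HB \subset B by apply/subsetP => z; rewrite inE => /andP[].
have HAA : HA \subset A by apply/subsetP => z; rewrite inE => /andP[].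
have eHB : D * #|HB|%:R <= E.
  rewrite esum2; apply: sum_sub_ge => // y; first by rewrite inE => /andP[].
have eHA : D * #|HA|%:R <= E.
  rewrite esum1; apply: sum_sub_ge => // y; first by rewrite inE => /andP[].
have An : #|A|%:R <= n by rewrite ler_nat max_card.
have Bn : #|B|%:R <= n by rewrite ler_nat max_card.
have A0 : 0 <= #|A|%:R :> R by [].
have B0 : 0 <= #|B|%:R :> R by [].
set P : R := #|A|%:R * #|B|%:R.
have P0 : 0 <= P by rewrite /P mulr_ge0.
have Pn : P <= n * n by rewrite /P; apply: ler_pM.
have -> : (D / (3 * n)) ^+ 2 * #|A|%:R * #|B|%:R = D / (9 * n * n) * (D * P).
  by rewrite /P; field; rewrite gt_eqF.
case: (lerP D (#|HB|%:R)) => hHB.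
  have hDD : D * D <= E.
    apply: le_trans eHB; apply: ler_wpM2l => //; lra.
  have : D * P <= D * (n * n) by apply: ler_wpM2l => //; lra.
  have hq : D / (9 * n * n) * (D * (n * n)) = D * D / 9 by field; rewrite gt_eqF.
  move=> h; apply: le_trans (_ : D / (9 * n * n) * (D * (n * n)) <= E).
    by apply: ler_wpM2l => //; apply: divr_ge0; lra.
  rewrite hq; have : 0 <= D * D by rewrite mulr_ge0 //; lra.
  lra.
have light : forall x y, x \in A -> x \notin HA -> y \in B -> y \notin HB -> e x y.
  move=> x y hx hxH hy hyH; have [j hj hyj] := hcov x y.
  case: j hj hyj => [|j] hj hyj; first by move: hyj; rewrite /= inE.
  have hyA : #|nb e y :&: A|%:R < D.
    by move: hyH; rewrite inE hy /= -ltNge.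
  have := chain hgood hS hHB hj hy hyA hyj => hD.
  by move: hxH; rewrite inE hx hD.
set LA := A :\: HA; set LB := B :\: HB.
have LAA : LA \subset A by apply: subsetDl.
have eLL : #|LB|%:R * #|LA|%:R <= E.
  rewrite esum1; apply: sum_sub_ge => // x hx.
  rewrite ler_nat; apply: subset_leq_card; apply/subsetP => y hy.
  move: hx hy; rewrite !in_setD => /andP[hxH hxA] /andP[hyH hyB].
  by rewrite in_setI hyB andbT inE; apply: light.
have cA : #|A|%:R = #|HA|%:R + #|LA|%:R :> R.
  by rewrite -natrD -(cardsID HA A) (setIidPr HAA).
have cB : #|B|%:R = #|HB|%:R + #|LB|%:R :> R.
  by rewrite -natrD -(cardsID HB B) (setIidPr HBB).
have LAn : #|LA|%:R <= n by rewrite ler_nat max_card.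
have E0 : 0 <= E by [].
have hP : D * P = D * (#|LB|%:R * #|LA|%:R) + #|LA|%:R * (D * #|HB|%:R)
                  + #|B|%:R * (D * #|HA|%:R).
  by rewrite /P cA cB; ring.
have t1 : D * (#|LB|%:R * #|LA|%:R) <= D * E by apply: ler_wpM2l => //; lra.
have t2 : #|LA|%:R * (D * #|HB|%:R) <= n * E.
  apply: ler_pM => //; apply: mulr_ge0 => //; lra.
have t3 : #|B|%:R * (D * #|HA|%:R) <= n * E.
  apply: ler_pM => //; apply: mulr_ge0 => //; lra.
have t4 : D * E <= n * E by apply: ler_wpM2r.
have hDP : D * P <= 3 * n * E by lra.
apply: le_trans (_ : D / (9 * n * n) * (3 * n * E) <= E).
  by apply: ler_wpM2l => //; apply: divr_ge0; lra.
have -> : D / (9 * n * n) * (3 * n * E) = (D / (3 * n)) * E by field; rewrite gt_eqF.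
rewrite -[X in _ <= X]mul1r; apply: ler_wpM2r => //.
by rewrite ler_pdivrMr ?mul1r; lra.
Qed.

Lemma prob_good (R : realType) (T : finType) (e : rel T) (th D p : R) (K : nat) :
  0 <= p <= 1 -> 0 <= th -> 2 * D = p * th / 4 ->
  1 - (#|T| * #|T| * K)%:R * sequences.expR (- (p * th / 4))
  <= prob_random_subset p (goodS e th (2 * D) K).
Proof.
move=> hp th0 hD.
pose bad := fun (i : (T * T) * 'I_K) (S : {set T}) =>
  (i.1.2 \in lev e th i.1.1 (i.2).+1) &&
  (#|(nb e i.1.2 :&: lev e th i.1.1 i.2) :&: S|%:R < 2 * D).
have h1 : prob_random_subset p (predC (goodS e th (2 * D) K))
          <= prob_random_subset p (fun S => [exists i, bad i S]).
  apply: prob_mono => // S /=; rewrite /goodS => /forallPn[u] /forallPn[v] /forallPn[j].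
  rewrite negb_imply -ltNge => hb; apply/existsP; exists ((u, v), j); exact: hb.
have h2 := prob_union bad hp.
have h3 : forall i, prob_random_subset p (bad i) <= sequences.expR (- (p * th / 4)).
  move=> [[u v] j]; rewrite /bad /=.
  case hv: (v \in lev e th u j.+1); last first.
    by rewrite prob_wgt big_pred0 ?expR_ge0.
  have hZ : th <= #|nb e v :&: lev e th u j|%:R by move: hv; rewrite /= inE.
  apply: le_trans (chernoff _ _ hp) _.
  rewrite ler_expR; have [p0 p1] := andP hp.
  have : p * th <= p * #|nb e v :&: lev e th u j|%:R by apply: ler_wpM2l.
  lra.
have h4 : \sum_i prob_random_subset p (bad i) <= (#|T| * #|T| * K)%:R * sequences.expR (- (p * th / 4)).
  apply: le_trans (ler_sum _ (fun i _ => h3 i)) _.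
  by rewrite sumr_const card_prod card_prod card_ord mulr_natl.
rewrite prob_compl; lra.
Qed.

Lemma numeric (R : realType) (p q M : R) (K : nat) :
  0 < p <= 1/2 -> 0 < q -> 0 <= M -> q * (M + 4) <= 1 ->
  (96 * K%:R) ^+ 2 * q ^+ 4 <= M -> (0 < K)%N ->
  powR p (q ^-1 ^+ 4) * q ^+ 5 <= (p * q ^+ 2 / (96 * K%:R)) ^+ 2.
Proof.
move=> /andP[p0 p2] q0 M0 hq h96 K0.
have hq1 : q <= 1.
  have : 0 <= q * M by rewrite mulr_ge0 // ltW.
  lra.
set y := q^-1.
have qy : q * y = 1 by rewrite /y mulfV // gt_eqF.
have y0 : 0 < y by rewrite /y invr_gt0.
have hy : M + 4 <= y.
  have := ler_wpM2r (ltW y0) hq; rewrite mul1r mulrC mulrA (mulrC y) qy mul1r.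
  done.
set x := y ^+ 4.
have y1 : 1 <= y by lra.
have hx : y <= x.
  rewrite /x; have h2 : y <= y ^+ 2.
    by rewrite expr2 -{1}[y]mul1r; apply: ler_wpM2r; lra.
  have h4 : y ^+ 2 <= y ^+ 4.
    rewrite (_ : 4 = 2 + 2)%N // exprD -{1}[y ^+ 2]mul1r; apply: ler_wpM2r.
      by rewrite exprn_ge0 // ltW.
    lra.
  lra.
set m := Num.truncn x.
have [hm1 hm2] : (m%:R <= x) /\ (x < m.+1%:R).
  by have /andP[] := truncn_itv (ltW (lt_le_trans y0 hx)).
clearbody m.
have m2 : (2 < m)%N.
  rewrite -(ltr_nat R); have := hm2; rewrite -natr1; lra.
have hpow : powR p x <= p ^+ m.
  rewrite -powR_mulrn; last by apply: ltW.
  have hp1 : 0 < p <= 1 by apply/andP; split; lra.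
  exact: (ger_powR hp1 hm1).
pose k := (m - 2)%N.
have mk : m = (2 + k)%N by rewrite /k subnKC // ltnW.
clearbody k.
have hk : (k < 2 ^ k)%N by apply: ltn_expl.
have hB : x - 2 <= (2 ^ k)%:R :> R.
  have : (k.+1 <= 2 ^ k)%N := hk.
  rewrite -(ler_nat R) => h; apply: le_trans h.
  have hkm : k.+1%:R = m%:R - 1 :> R by rewrite mk -addn1 !natrD; lra.
  rewrite hkm; have := hm2; rewrite -natr1; lra.
set B : R := (2 ^ k)%:R.
have B0 : 0 < B by rewrite /B ltr0n expn_gt0.
have hpk : p ^+ m <= p ^+ 2 / B.
  rewrite mk exprD /B natrX; apply: ler_wpM2l; first by rewrite exprn_ge0 // ltW.
  rewrite -exprVn; apply: lerXn2r; rewrite ?nnegrE.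
  - lra.
  - by rewrite invr_ge0.
  - move: p2; rewrite div1r; done.
have hq3 : M <= q ^+ 3 * B.
  have e1 : q ^+ 3 * x = y by rewrite /x (_ : 4 = 3 + 1)%N // exprD mulrA -exprMn qy expr1n mul1r expr1.
  have q31 : q ^+ 3 <= 1.
    apply: exprn_ile1; lra.
  have : q ^+ 3 * (x - 2) <= q ^+ 3 * B by apply: ler_wpM2l; [rewrite exprn_ge0 // ltW | exact: hB].
  have : 0 <= q ^+ 3 by rewrite exprn_ge0 // ltW.
  lra.
have step1 : powR p x * q ^+ 5 <= p ^+ 2 / B * q ^+ 5.
  apply: ler_wpM2r; first by rewrite exprn_ge0 // ltW.
  exact: le_trans hpow hpk.
apply: le_trans step1 _.
have K0' : 0 < K%:R :> R by rewrite ltr0n.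
set W : R := (96 * K%:R) ^+ 2 in h96 *.
have W0 : 0 < W by rewrite /W exprn_gt0 // mulr_gt0.
have -> : (p * q ^+ 2 / (96 * K%:R)) ^+ 2 = p ^+ 2 * (q ^+ 4 / W).
  by rewrite /W; field; rewrite gt_eqF.
have -> : p ^+ 2 / B * q ^+ 5 = p ^+ 2 * (q ^+ 5 / B) by rewrite mulrAC -mulrA.
apply: ler_wpM2l; first by rewrite exprn_ge0 // ltW.
have c1 : q ^+ 5 * W <= q ^+ 4 * B.
  have h1 : q * (W * q ^+ 4) <= q * M by apply: ler_wpM2l => //; apply: ltW.
  have h2 : q * M <= q * (q ^+ 3 * B) by apply: ler_wpM2l => //; apply: ltW.
  have E1 : q ^+ 5 * W = q * (W * q ^+ 4) by ring.
  have E2 : q ^+ 4 * B = q * (q ^+ 3 * B) by ring.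
  rewrite E1 E2; exact: le_trans h1 h2.
have E3 : q ^+ 5 / B = (q ^+ 5 * W) * (B * W)^-1.
  by field; rewrite !gt_eqF.
have E4 : q ^+ 4 / W = (q ^+ 4 * B) * (B * W)^-1.
  by field; rewrite !gt_eqF.
rewrite E3 E4; apply: ler_wpM2r => //.
by rewrite invr_ge0 mulr_ge0 // ltW.
Qed.

Lemma asym (R : realType) (a Kr eps : R) (n : nat) :
  0 < a -> 0 <= Kr -> 0 < eps -> 6 * Kr / (a ^+ 3 * eps) <= n%:R -> (0 < n)%N ->
  (n * n)%:R * Kr * sequences.expR (- (a * n%:R)) <= eps.
Proof.
move=> a0 K0 e0 hN n0.
have nr0 : 0 < n%:R :> R by rewrite ltr0n.
set x := a * n%:R.
have x0 : 0 < x by rewrite mulr_gt0.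
have hx := expR_ge1Dxn 2 (ltW x0).
rewrite (_ : (2.+1)`!%:R = 6 :> R) // in hx.
have hx3 : 0 < x ^+ 3 by rewrite exprn_gt0.
have hE : x ^+ 3 / 6 <= sequences.expR x by lra.
have hE0 : 0 < sequences.expR x := expR_gt0 x.
rewrite expRN.
rewrite ler_pdivrMr //.
apply: le_trans (_ : eps * (x ^+ 3 / 6) <= _); last by apply: ler_wpM2l => //; apply: ltW.
have hN' : 6 * Kr <= n%:R * (a ^+ 3 * eps).
  by rewrite -ler_pdivrMr ?mulr_gt0 ?exprn_gt0.
have -> : eps * (x ^+ 3 / 6) = n%:R * n%:R * (n%:R * (a ^+ 3 * eps)) / 6.
  by rewrite /x; field.
rewrite natrM.
have hnn : 0 <= n%:R * n%:R :> R by rewrite mulr_ge0.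
have := ler_wpM2l hnn hN'.
lra.
Qed.

Theorem lemma3p12 (R : realType) :
  exists c : R, 0 < c /\
  forall p q : R, 0 < p < c -> 0 < q < c ->
  forall eps : R, 0 < eps ->
  exists N : nat, forall n : nat, (N <= n)%N ->
  forall e : rel 'I_n, simple_graph e -> cut_dense e q ->
    1 - eps <= prob_random_subset p
      (fun S : {set 'I_n} =>
         [forall U : {set 'I_n}, (S \subset U) ==>
            cut_dense_on e U (powR p (q ^-1 ^+ 4) * q ^+ 5)]).
Proof.
pose M : R := (864:R) ^+ 2.
have M0 : 0 <= M by rewrite /M exprn_ge0.
have hM96 : forall (K : nat) (q : R), 0 <= q -> q ^+ 2 * K%:R <= 9 ->
    (96 * K%:R) ^+ 2 * q ^+ 4 <= M.
  move=> K q q0 hK; rewrite /M (_ : 4 = 2 * 2)%N // exprM -exprMn.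
  apply: lerXn2r; rewrite ?nnegrE ?mulr_ge0 ?exprn_ge0 //.
  rewrite mulrAC -mulrA mulrC; lra.
clearbody M.
exists (1 / (M + 4)); split; first by rewrite divr_gt0 //; lra.
move=> p q /andP[p0 pc] /andP[q0 qc] eps eps0.
have M40 : 0 < M + 4 by lra.
have hpM : p * (M + 4) <= 1.
  by move: (ltW pc); rewrite ler_pdivlMr // mul1r.
have hqM : q * (M + 4) <= 1.
  by move: (ltW qc); rewrite ler_pdivlMr // mul1r.
have p4 : p <= 1/4.
  have : 0 <= p * M by rewrite mulr_ge0 // ltW.
  lra.
have q4 : q <= 1/4.
  have : 0 <= q * M by rewrite mulr_ge0 // ltW.
  lra.
have q2 : 0 < q ^+ 2 by rewrite exprn_gt0.
pose K := (Num.truncn (8 / q ^+ 2)).+1.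
have [hK1 hK2] : (K.-1%:R <= 8 / q ^+ 2) /\ (8 / q ^+ 2 < K%:R).
  have h80 : (0:R) < 8 by [].
  by have /andP[] := truncn_itv (ltW (divr_gt0 h80 q2)).
clearbody K.
have K0 : (0 < K)%N.
  by rewrite -(ltr_nat R); apply: le_lt_trans hK2; rewrite divr_ge0 // ltW.
have K0r : 0 < K%:R :> R by rewrite ltr0n.
have hK8 : 8 < q ^+ 2 * K%:R.
  by move: hK2; rewrite ltr_pdivrMr // mulrC.
have hK9 : q ^+ 2 * K%:R <= 9.
  have : K%:R = K.-1%:R + 1 :> R by rewrite natr1 prednK.
  move: hK1; rewrite ler_pdivlMr // => hK1 hK; rewrite hK mulrDr mulr1 mulrC.
  have : q ^+ 2 <= 1 by rewrite expr2; nra.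
  lra.
pose a := p * q ^+ 2 / (16 * K%:R).
have a0 : 0 < a by rewrite /a divr_gt0 ?mulr_gt0.
pose N := maxn 4 (Num.truncn (6 * K%:R / (a ^+ 3 * eps))).+1.
exists N => n hn e hG hcd.
have n4 : (4 <= n)%N by apply: leq_trans hn; rewrite leq_maxl.
have n0 : (0 < n)%N by apply: leq_trans n4.
have nr0 : 0 < n%:R :> R by rewrite ltr0n.
have cT : #|'I_n| = n by rewrite card_ord.
pose th : R := q ^+ 2 * #|'I_n|%:R / (4 * K%:R).
pose D : R := p * th / 8.
have th0 : 0 <= th by rewrite /th divr_ge0 ?mulr_ge0 // ?ltW //; lra.
have hp01 : 0 <= p <= 1 by apply/andP; split; lra.
have hcov : forall u v : 'I_n, exists2 j, (j <= K)%N & v \in lev e th u j.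
  move=> u v; apply: (cover u v hG hcd) => //.
    by apply/andP; split; lra.
  by rewrite cT.
have hD : 2 * D = p * th / 4 by rewrite /D; field.
have hprob := @prob_good R _ e th D p K hp01 th0 hD.
have nK : (K.-1 < K)%N by rewrite prednK.
have hpt : p * th / 4 = a * n%:R by rewrite /th /a cT; field; rewrite gt_eqF.
have hbound : (#|'I_n| * #|'I_n| * K)%:R * sequences.expR (- (p * th / 4)) <= eps.
  rewrite hpt cT natrM; apply: asym => //.
  have := truncn_itv (divr_ge0 (mulr_ge0 (ler0n R 6) (ltW K0r)) (ltW (mulr_gt0 (exprn_gt0 3 a0) eps0))).
  move=> /andP[_ h]; apply: ltW; apply: lt_le_trans h _.
  rewrite ler_nat; apply: leq_trans hn; exact: leq_maxr.
have q1 : q ^+ 2 <= 1 by rewrite expr2; nra.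
have D0 : 0 < D.
  rewrite /D /th cT; apply: divr_gt0 => //; apply: mulr_gt0 => //.
  by apply: divr_gt0; rewrite ?mulr_gt0.
have Dn : D <= #|'I_n|%:R.
  have E : D = n%:R * (p * q ^+ 2 / (32 * K%:R)) by rewrite /D /th cT; field; rewrite gt_eqF.
  rewrite E cT -{2}[n%:R]mulr1; apply: ler_wpM2l; first exact: ltW.
  rewrite ler_pdivrMr ?mulr_gt0 // mul1r.
  have : p * q ^+ 2 <= 1/4 * 1 by apply: ler_pM => //; apply: ltW.
  have : 1 <= K%:R :> R by rewrite ler1n.
  lra.
have hp12 : 0 < p <= 1/2 by apply/andP; split => //; lra.
have hnum := numeric hp12 q0 M0 hqM (hM96 K q (ltW q0) hK9) K0.
have hEq : D / (3 * #|'I_n|%:R) = p * q ^+ 2 / (96 * K%:R).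
  by rewrite /D /th cT; field; rewrite !gt_eqF.
have hmono : prob_random_subset p (goodS e th (2 * D) K) <=
    prob_random_subset p (fun S : {set 'I_n} =>
         [forall U : {set 'I_n}, (S \subset U) ==>
            cut_dense_on e U (powR p (q ^-1 ^+ 4) * q ^+ 5)]).
  apply: prob_mono => // S hgood.
  apply/forallP => U; apply/implyP => hSU.
  apply/forallP => A; apply/forallP => B; apply/implyP => /andP[/eqP hAB /eqP hABU].
  have := det_cut hG hgood hcov D0 Dn hSU hAB hABU.
  rewrite hEq; apply: le_trans.
  apply: ler_wpM2r => //; apply: ler_wpM2r => //.
apply: le_trans _ (le_trans hprob hmono).
by rewrite lerD2l lerN2.
Qed.
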